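(* Let $N\ge2$ and let $x(t)=(x_1(t),\dots,x_N(t))$, $x_i(t)\in\mathbb{R}$, be a (Carathéodory) solution of $$\dot x_i(t)=\frac{\lambda_i(x)}{N}\sum_{j=1}^N M_{ij}(t)\,\phi_{ij}(x_i,x_j)\,(x_j(t)-x_i(t)),\qquad i=1,\dots,N,$$ where all $M_{ij}:[0,+\infty)\to[0,1]$ are Lebesgue measurable and $\lambda_i:\mathbb{R}^N\to\mathbb{R}^+$, $\phi_{ij}:\mathbb{R}\times\mathbb{R}\to\mathbb{R}^+$ are Lipschitz continuous and strictly positive. Assume that $x_+^*:=\max\{x_i(t):i=1,\dots,N\}$ is constant in $t$, and let $I^+(t)$ be the set of indices $i$ with $x_i(t)=x_+^*$. Then if $i\notin I^+(t)$, it holds $i\notin I^+(t+h)$ for all $h>0$. Similarly, if $x_-^*:=\min\{x_i(t):i=1,\dots,N\}$ is constant in $t$ and $I^-(t)$ is the set of indices with $x_i(t)=x_-^*$, then $i\notin I^-(t)$ implies $i\notin I^-(t+h)$ for all $h>0$. *)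

(* Defs.v *)
From mathcomp Require Import all_boot all_order all_algebra.
From mathcomp Require Import all_classical all_reals all_analysis.
Set Implicit Arguments. Unset Strict Implicit. Unset Printing Implicit Defensive.
Import Order.TTheory GRing.Theory Num.Theory.
Local Open Scope classical_set_scope.
Local Open Scope ring_scope.

Definition distN (R : realType) (N : nat) (y z : 'I_N -> R) : R :=
  \big[Num.max/0]_(k < N) `|y k - z k|.

(* Lipschitz continuity of a map R^N -> R (any norm on R^N is equivalent) *)
Definition lipschitzN (R : realType) (N : nat) (f : ('I_N -> R) -> R) : Prop :=
  exists L : R, forall y z, `|f y - f z| <= L * distN y z.

Definition lipschitz2 (R : realType) (f : R -> R -> R) : Prop :=
  exists L : R, forall a b a' b', `|f a b - f a' b'| <= L * (`|a - a'| + `|b - b'|).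

Definition rhs (R : realType) (N : nat) (lam : 'I_N -> ('I_N -> R) -> R)
  (M : 'I_N -> 'I_N -> R -> R) (phi : 'I_N -> 'I_N -> R -> R -> R)
  (x : 'I_N -> R -> R) (i : 'I_N) (s : R) : R :=
  lam i (fun k => x k s) / N%:R *
  \sum_(j < N) M i j s * phi i j (x i s) (x j s) * (x j s - x i s).

Definition caratheodory_solution (R : realType) (N : nat)
  (lam : 'I_N -> ('I_N -> R) -> R) (M : 'I_N -> 'I_N -> R -> R)
  (phi : 'I_N -> 'I_N -> R -> R -> R) (x : 'I_N -> R -> R) : Prop :=
  forall (i : 'I_N) (t : R), 0 <= t ->
    (lebesgue_measure : measure _ R).-integrable `[0, t]
        (fun s => (rhs lam M phi x i s)%:E) /\
    x i t = x i 0 + Rintegral lebesgue_measure `[0, t] (rhs lam M phi x i).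

Definition is_max_of (R : realType) (N : nat) (v : 'I_N -> R) (c : R) : Prop :=
  (forall i, v i <= c) /\ (exists i, v i = c).
Definition is_min_of (R : realType) (N : nat) (v : 'I_N -> R) (c : R) : Prop :=
  (forall i, c <= v i) /\ (exists i, v i = c).

(* Main.v *)
Require Import Defs.
From mathcomp Require Import all_boot all_order all_algebra.
From mathcomp Require Import all_classical all_reals all_analysis.
From mathcomp Require Import lra ring.
Import Order.TTheory GRing.Theory Num.Theory.
Import numFieldNormedType.Exports.
Local Open Scope classical_set_scope.
Local Open Scope ring_scope.

Section S.
Context {R : realType}.
Notation mu := (@lebesgue_measure R).

Lemma mu_oc (u s : R) : u <= s -> mu `]u, s] = (s - u)%:E.
Proof.
move=> us; have := lebesgue_measure_itv `]u, s]; rewrite /= => ->.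
rewrite lte_fin; case: ltgtP us => //=.
by move=> -> _; rewrite subrr.
Qed.

Lemma itv_int_cst (u s k : R) :
  mu.-integrable `]u, s] (EFin \o cst k).
Proof.
apply: measurable_bounded_integrable => //.
- have := lebesgue_measure_itv `]u, s]; rewrite /= => ->.
  case: ifPn => _; last exact: ltry.
  by rewrite -EFinB ltry.
- exact: bounded_cst.
Qed.

Lemma step (y f : R -> R) (K B a s : R) :
  mu.-integrable `]a, s] (EFin \o f) ->
  (forall u, a <= u -> u <= s -> y s - y u = \int[mu]_(v in `]u, s]) f v) ->
  (forall v, a <= v -> v <= s -> - f v <= K * y v /\ 0 <= y v /\ y v <= B) ->
  0 <= K -> a <= s -> K * (s - a) <= 1/2 -> 0 < y a -> 0 < y s.
Proof.
move=> intf hdiff hb K0 as_ Kd ya.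
rewrite ltNge; apply/negP => ys0.
have ys : y s = 0 by have [_ [h _]] := hb s as_ (lexx s); apply/eqP; rewrite eq_le ys0 h.
set E := [set y u | u in `[a, s]].
have hub : has_ubound E.
  by exists B => _ [u /andP[h1 h2] <-]; have [_ [_ ]] := hb u h1 h2.
have hne : E !=set0 by exists (y a), a => //; rewrite /= in_itv /= lexx as_.
set S := sup E.
have yaS : y a <= S by apply: ub_le_sup hub _ _; exists a => //; rewrite /= in_itv /= lexx as_.
have key : forall u, a <= u -> u <= s -> y u <= S / 2.
  move=> u au us.
  have intu : mu.-integrable `]u, s] (EFin \o f).
    apply: integrableS intf => //; apply: subset_itv => //; by rewrite bnd_simp.
  have -> : y u = - \int[mu]_(v in `]u, s]) f v.
    by rewrite -hdiff // ys sub0r opprK.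
  have hD := RintegralD (mu := mu) (D := `]u, s]) (f1 := fun=> K * S) (f2 := f) _ (itv_int_cst u s (K * S)) intu.
  have h0 : 0 <= \int[mu]_(v in `]u, s]) (K * S + f v).
    apply: Rintegral_ge0 => v /=; rewrite in_itv /= => /andP[uv vs].
    have [h1 [h2 h3]] := hb v (le_trans au (ltW uv)) vs.
    have : y v <= S.
      by apply: ub_le_sup hub _ _; exists v => //; rewrite /= in_itv /= vs (le_trans au (ltW uv)).
    move=> yS; have KyS : K * y v <= K * S by rewrite ler_wpM2l.
    by rewrite -(opprK (f v)) subr_ge0 (le_trans h1).
  rewrite hD in h0; last by [].
  suff H : \int[mu]_(v in `]u, s]) (K * S) <= S / 2.
    by apply: le_trans H; rewrite -subr_ge0 opprK.
  rewrite Rintegral_cst //. have hm : fine (mu `]u, s]) = s - u := f_equal fine (mu_oc u s us). rewrite hm.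
  have S0 : 0 <= S by apply: le_trans yaS; exact: ltW.
  have h1 : K * S * (s - u) <= K * S * (s - a).
    by rewrite ler_wpM2l ?mulr_ge0 // lerD2l lerN2.
  have h2 : K * S * (s - a) = K * (s - a) * S by rewrite mulrAC.
  have h3 : K * (s - a) * S <= 1 / 2 * S by rewrite ler_wpM2r.
  by rewrite (le_trans h1) // h2 (le_trans h3) // mul1r mulrC.
have H : S <= S / 2.
  by apply: ge_sup hne _ => _ [u /andP[h1 h2] <-]; exact: key.
have S0 := lt_le_trans ya yaS; move: H S0; clearbody S; clear -S.
lra.
Qed.

Lemma core (y f : R -> R) (t h K B : R) :
  0 <= t -> 0 < h -> 0 <= K ->
  (forall s, 0 <= s -> mu.-integrable `[0, s] (EFin \o f)) ->
  (forall s, 0 <= s -> y s = y 0 + \int[mu]_(v in `[0, s]) f v) ->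
  (forall v, 0 <= v -> v <= t + h -> - f v <= K * y v /\ 0 <= y v /\ y v <= B) ->
  0 < y t -> 0 < y (t + h).
Proof.
move=> t0 h0 K0 hint hy hb yt.
have hdiff : forall u s, 0 <= u -> u <= s ->
    y s - y u = \int[mu]_(v in `]u, s]) f v.
  move=> u s u0 us.
  have e : forall p q r : R, p + q - (p + r) = q - r.
    by move=> p q r; rewrite opprD addrACA subrr add0r.
  rewrite (hy s (le_trans u0 us)) (hy u u0) e.
  apply: Rintegral_itvB => //; first exact: hint (le_trans u0 us).
set d := 1 / (2 * (K + 1)).
have K1 : 0 < K + 1 by rewrite ltr_wpDl.
have d0 : 0 < d by rewrite divr_gt0 // mulr_gt0.
have Kd : K * d <= 1 / 2.
  have e : (K + 1) * d = 1 / 2.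
    by rewrite /d !mul1r invfM mulrCA mulfV ?mulr1 // gt_eqF.
  by rewrite -e; apply: ler_wpM2r; [exact: ltW | rewrite lerDl].
have P : forall n : nat, forall s, t <= s -> s <= t + h -> s <= t + n%:R * d -> 0 < y s.
  elim=> [|n IH] s ts sth snd.
    by have -> : s = t by apply/eqP; rewrite eq_le ts -[t]addr0 -(mul0r d) snd.
  have [sn|ns] := leP s (t + n%:R * d); first exact: IH.
  set a := t + n%:R * d in ns.
  have ta : t <= a by rewrite /a lerDl mulr_ge0 // ltW.
  have a0 : 0 <= a by exact: le_trans t0 ta.
  have ya : 0 < y a by apply: IH => //; exact: le_trans (ltW ns) sth.
  apply: (@step y f K B a s) => //.
  - apply: integrableS (hint s (le_trans a0 (ltW ns))) => //.
    by apply: subset_itv; rewrite bnd_simp.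
  - by move=> u au us; apply: hdiff => //; exact: le_trans a0 au.
  - by move=> v av vs; apply: hb; [exact: le_trans a0 av | exact: le_trans vs sth].
  - exact: ltW.
  - apply: le_trans Kd; apply: ler_wpM2l => //.
    rewrite lerBlDl; apply: (le_trans snd).
    by rewrite /a -addrA lerD2l -natr1 mulrDl mul1r.
pose n := (Num.truncn (h / d)).+1.
apply: (P n) => //; first by rewrite lerDl ltW.
rewrite lerD2l -ler_pdivrMr //; exact: ltW (truncnS_gt _).
Qed.

Lemma intZ (g : R -> R) (k : R) (D : set R) : measurable (D : set (measurableTypeR R)) ->
  mu.-integrable D (EFin \o g) -> mu.-integrable D (EFin \o (fun s => k * g s)).
Proof.
move=> mD ig; have hZ := integrableZl mD k ig.
have -> : EFin \o (fun s => k * g s) = (fun x => (k%:E * (EFin \o g) x)%E).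
  by apply/funext => s /=; rewrite EFinM.
exact: hZ.
Qed.

Lemma int_abs_mono (g : R -> R) (v T : R) : 0 <= v -> v <= T ->
  mu.-integrable `[0, T] (EFin \o g) ->
  \int[mu]_(s in `[0, v]) `|g s| <= \int[mu]_(s in `[0, T]) `|g s|.
Proof.
move=> v0 vT ig.
have ia := integrable_norm ig.
rewrite -subr_ge0 (Rintegral_itvB ia) ?bnd_simp //.
by apply: Rintegral_ge0 => s _ /=.
Qed.
End S.

Notation mu := (@lebesgue_measure _).

Lemma side (R : realType) (N : nat)
  (lam : 'I_N -> ('I_N -> R) -> R) (M : 'I_N -> 'I_N -> R -> R)
  (phi : 'I_N -> 'I_N -> R -> R -> R) (x : 'I_N -> R -> R)
  (hMrange : forall i j t, 0 <= t -> 0 <= M i j t <= 1)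
  (hlam_lip : forall i, lipschitzN (lam i))
  (hlam_pos : forall i y, 0 < lam i y)
  (hphi_lip : forall i j, lipschitz2 (phi i j))
  (hphi_pos : forall i j a b, 0 < phi i j a b)
  (hsol : caratheodory_solution lam M phi x)
  (sg : R) (hsg : sg = 1 \/ sg = -1) (c : R)
  (hc : forall t, 0 <= t -> forall k, sg * x k t <= sg * c)
  (i : 'I_N) (t h : R) (t0 : 0 <= t) (h0 : 0 < h) (hne : x i t != c) :
  x i (t + h) != c.
Proof.
set T := t + h.
have T0 : 0 <= T by rewrite addr_ge0 // ltW.
have [C hC] : exists C, forall k v, 0 <= v -> v <= T -> `|x k v| <= C.
  exists (\sum_k (`|x k 0| + \int[mu]_(s in `[0, T]) `|rhs lam M phi x k s|)).
  move=> k v v0 vT.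
  have [ik ek] := hsol k v v0.
  have [iT _] := hsol k T T0.
  rewrite ek; apply: le_trans (ler_normD _ _) _.
  apply: (@le_trans _ _ (`|x k 0| + \int[mu]_(s in `[0, T]) `|rhs lam M phi x k s|)).
    rewrite lerD2l; apply: le_trans (le_normr_Rintegral _ ik) _ => //.
    exact: int_abs_mono.
  rewrite (bigD1 k) //= lerDl; apply: sumr_ge0 => j _.
  by rewrite addr_ge0 // Rintegral_ge0.
have C0 : 0 <= C by apply: le_trans (hC i 0 (lexx 0) T0).
have [L hL] := hlam_lip i.
have /choice [Lf hLf] : forall j, exists L : R, forall a b a' b',
    `|phi i j a b - phi i j a' b'| <= L * (`|a - a'| + `|b - b'|).
  by move=> j; exact: hphi_lip.
set A := `|lam i (fun=> 0)| + `|L| * C.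
set K := A / N%:R * \sum_j (`|phi i j 0 0| + `|Lf j| * (C + C)).
have hK : forall v, 0 <= v -> v <= T ->
    lam i (fun k => x k v) / N%:R * \sum_j phi i j (x i v) (x j v) <= K.
  move=> v v0 vT.
  apply: ler_pM.
  - by rewrite divr_ge0 // ltW.
  - by apply: sumr_ge0 => j _; exact: ltW.
  - apply: ler_wpM2r; first by rewrite invr_ge0.
    have hd : distN (fun k => x k v) (fun=> 0) <= C.
      apply: bigmax_le => // k _; rewrite subr0; exact: hC.
    have hd0 : 0 <= distN (fun k => x k v) (fun=> 0).
      apply: le_trans (_ : `|x i v - 0| <= _) => //.
      exact: (le_bigmax _ _ i).
    have := hL (fun k => x k v) (fun=> 0).
    move=> hl.
    have e : lam i (fun k => x k v) = lam i (fun=> 0) + (lam i (fun k => x k v) - lam i (fun=> 0)).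
      by rewrite addrC subrK.
    rewrite e; apply: lerD; first exact: ler_norm.
    apply: le_trans (ler_norm _) _; apply: le_trans hl _.
    apply: le_trans (_ : `|L| * distN (fun k => x k v) (fun=> 0) <= _).
      by apply: ler_wpM2r => //; exact: ler_norm.
    by apply: ler_wpM2l.
  - apply: ler_sum => j _.
    have e : phi i j (x i v) (x j v) = phi i j 0 0 + (phi i j (x i v) (x j v) - phi i j 0 0).
      by rewrite addrC subrK.
    rewrite e; apply: lerD; first exact: ler_norm.
    apply: le_trans (ler_norm _) _; apply: le_trans (hLf j _ _ _ _) _.
    apply: le_trans (_ : `|Lf j| * (`|x i v - 0| + `|x j v - 0|) <= _).
      by apply: ler_wpM2r; [rewrite addr_ge0 | exact: ler_norm].
    by apply: ler_wpM2l => //; rewrite !subr0 lerD // hC.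
have K0 : 0 <= K.
  apply: mulr_ge0; first by rewrite divr_ge0 // addr_ge0 // mulr_ge0.
  by apply: sumr_ge0 => j _; rewrite addr_ge0 // mulr_ge0 // addr_ge0.
have sg0 : sg != 0 by case: hsg => ->; rewrite ?oppr_eq0 oner_eq0.
set y := fun s => sg * (c - x i s).
set f := fun s => - sg * rhs lam M phi x i s.
have y0 : forall v, 0 <= v -> 0 <= y v.
  by move=> v v0; rewrite /y mulrBr subr_ge0 hc.
have yeq : forall s, y s = 0 -> x i s = c.
  move=> s /eqP; rewrite /y mulf_eq0 (negbTE sg0) /= subr_eq0 => /eqP ->//.
have : 0 < y (t + h).
  apply: (@core R y f t h K (`|c| + C)) => //.
  - move=> s s0; have [hi _] := hsol i s s0.
    exact: intZ hi.
  - move=> s s0; have [_ es] := hsol i s s0.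
    rewrite /y /f RintegralZl //; last by have [hi _] := hsol i s s0.
    by rewrite es; ring.
  - move=> v v0 vT; split; last split.
    + rewrite /f /y mulNr opprK /rhs.
      have Y0 := y0 v v0; rewrite /y in Y0.
      set Y := sg * (c - x i v) in Y0 *.
      have hA : 0 <= lam i (fun k => x k v) / N%:R by rewrite divr_ge0 // ltW.
      apply: (@le_trans _ _ (lam i (fun k => x k v) / N%:R *
          (\sum_j phi i j (x i v) (x j v)) * Y)); last first.
        by apply: ler_wpM2r => //; exact: hK.
      rewrite mulrCA -mulrA; apply: ler_wpM2l => //.
      rewrite mulr_sumr mulr_suml; apply: ler_sum => j _.
      have hM := hMrange i j v v0; case/andP: hM => M0 M1.
      have ph0 : 0 <= phi i j (x i v) (x j v) by exact: ltW.
      have hd : sg * (x j v - x i v) <= Y by rewrite /Y !mulrBr lerD2r hc.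
      rewrite mulrCA; apply: (@le_trans _ _ (M i j v * phi i j (x i v) (x j v) * Y)).
        by apply: ler_wpM2l => //; rewrite mulr_ge0.
      by apply: ler_wpM2r => //; rewrite ler_piMl.
    + exact: y0.
    + rewrite /y; apply: le_trans (ler_norm _) _.
      rewrite normrM (_ : `|sg| = 1); last by case: hsg => ->; rewrite ?normrN normr1.
      by rewrite mul1r; apply: le_trans (ler_normB _ _) _; rewrite lerD2l hC.
  - rewrite lt0r y0 // andbT; apply/negP => /eqP /yeq he.
    by rewrite he eqxx in hne.
rewrite lt0r => /andP[/eqP hy _]; apply/negP => /eqP he; apply: hy.
by rewrite /y he subrr mulr0.
Qed.

Theorem lemma1 (R : realType) (N : nat) (hN : (2 <= N)%N)
  (lam : 'I_N -> ('I_N -> R) -> R) (M : 'I_N -> 'I_N -> R -> R)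
  (phi : 'I_N -> 'I_N -> R -> R -> R) (x : 'I_N -> R -> R)
  (hMmeas : forall i j, measurable_fun [set t : R | 0 <= t] (M i j))
  (hMrange : forall i j t, 0 <= t -> 0 <= M i j t <= 1)
  (hlam_lip : forall i, lipschitzN (lam i))
  (hlam_pos : forall i y, 0 < lam i y)
  (hphi_lip : forall i j, lipschitz2 (phi i j))
  (hphi_pos : forall i j a b, 0 < phi i j a b)
  (hsol : caratheodory_solution lam M phi x) :
  (forall cplus : R,
     (forall t, 0 <= t -> is_max_of (fun k => x k t) cplus) ->
     forall (i : 'I_N) (t : R), 0 <= t -> x i t != cplus ->
       forall h : R, 0 < h -> x i (t + h) != cplus) /\
  (forall cminus : R,
     (forall t, 0 <= t -> is_min_of (fun k => x k t) cminus) ->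
     forall (i : 'I_N) (t : R), 0 <= t -> x i t != cminus ->
       forall h : R, 0 < h -> x i (t + h) != cminus).
Proof.
split.
- move=> cp hmax i t t0 ne h h0.
  apply: (@side R N lam M phi x hMrange hlam_lip hlam_pos hphi_lip hphi_pos hsol 1 _ cp) => //.
  + by left.
  + by move=> s s0 k; rewrite !mul1r; case: (hmax s s0).
- move=> cm hmin i t t0 ne h h0.
  apply: (@side R N lam M phi x hMrange hlam_lip hlam_pos hphi_lip hphi_pos hsol (-1) _ cm) => //.
  + by right.
  + by move=> s s0 k; rewrite !mulN1r lerN2; case: (hmin s s0).
Qed.
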